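(* Let $G$ be a finitely generated abelian group, written as $G=D\times\mathbb{Z}^n$ with $D$ finite and $n\geq1$. For $d\in\mathbb{N}$ let $a_d$ be the number of subgroups of index $d$ in $D$. Then for every $m\geq1$ the number of subgroups of index $m$ in $G$ equals $$\sum_{d_1\mid d_2\mid\cdots\mid d_n\mid m}a_{d_1}d_1d_2\cdots d_n,$$ the sum running over all chains of positive integers $d_1,\dots,d_n$ with $d_1\mid d_2$, \dots, $d_{n-1}\mid d_n$, $d_n\mid m$. *)

(* Defs.v *)
From mathcomp Require Import all_boot all_order all_algebra.
Set Implicit Arguments. Unset Strict Implicit. Unset Printing Implicit Defensive.
Import GRing.Theory.
Local Open Scope ring_scope.

Definition is_subgroup (V : zmodType) (H : V -> Prop) : Prop :=
  H 0 /\ (forall x y, H x -> H y -> H (x - y)).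

Definition has_index (V : zmodType) (H : V -> Prop) (m : nat) : Prop :=
  exists g : 'I_m -> V, forall x, exists! i : 'I_m, H (x - g i).

(* The number of subsets H of V satisfying P is N: the family of such
   subsets is in bijection with 'I_N (subsets compared extensionally). *)
Definition num_sets (V : Type) (P : (V -> Prop) -> Prop) (N : nat) : Prop :=
  exists f : 'I_N -> (V -> Prop),
    injective f /\ (forall H, P H <-> exists i, f i = H).

Definition num_subgroups_of_index (V : zmodType) (m N : nat) : Prop :=
  num_sets (fun H : V -> Prop => is_subgroup H /\ has_index H m) N.

(* The chains d_1 | d_2 | ... | d_n | m of positive integers, encoded as
   functions t : 'I_n -> 'I_m.+1 (each d_i divides m >= 1, so d_i <= m). *)
Definition is_div_chain (n m : nat) (t : {ffun 'I_n -> 'I_m.+1}) : bool :=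
  let s := [seq nat_of_ord (t i) | i <- enum 'I_n] in
  all (fun d => 0 < d)%N s && sorted dvdn (rcons s m).

(* sum over chains d_1 | ... | d_n | m of a_{d_1} d_1 d_2 ... d_n
   (d_1 is the head of the chain; n >= 1 in the statement). *)
Definition chain_sum (a : nat -> nat) (n m : nat) : nat :=
  (\sum_(t : {ffun 'I_n -> 'I_m.+1} | is_div_chain t)
     a (head 0%N [seq nat_of_ord (t i) | i <- enum 'I_n]) *
     \prod_(i < n) nat_of_ord (t i))%N.

(* Main.v *)
Require Import Defs.
From mathcomp Require Import all_boot all_order all_algebra.
From Stdlib Require Import ClassicalEpsilon FunctionalExtensionality PropExtensionality Classical.
Set Implicit Arguments. Unset Strict Implicit. Unset Printing Implicit Defensive.
Import GRing.Theory Num.Theory.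

Definition sq n B (t : {ffun 'I_n -> 'I_B}) : seq nat := [seq nat_of_ord (t i) | i <- enum 'I_n].

Definition CS (a : nat -> nat) n B m : nat :=
  \sum_(t : {ffun 'I_n -> 'I_B} | all (fun d => 0 < d) (sq t) && sorted dvdn (rcons (sq t) m))
     a (head m (sq t)) * \prod_(i < n) nat_of_ord (t i).

Lemma CS0 a B m : CS a 0 B m = a m.
Proof.
rewrite /CS (eq_bigl predT); last by move=> t; rewrite /sq enum_ord0.
rewrite (eq_bigr (fun _ => a m)); last by move=> t _; rewrite /sq enum_ord0 big_ord0 muln1.
by rewrite sum_nat_const card_ffun !card_ord expn0 mul1n.
Qed.

Lemma sorted_rcons2 (s : seq nat) x m :
  sorted dvdn (rcons (rcons s x) m) = sorted dvdn (rcons s x) && (x %| m).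
Proof.
case: s => [|h s] /=; first by rewrite andbT.
by rewrite rcons_path last_rcons.
Qed.

Lemma CSS a n B m : CS a n.+1 B m =
  \sum_(x : 'I_B | (0 < x) && (x %| m)) x * CS a n B x.
Proof.
pose join (p : 'I_B * {ffun 'I_n -> 'I_B}) : {ffun 'I_n.+1 -> 'I_B} :=
  [ffun i => if unlift ord_max i is Some j then p.2 j else p.1].
pose spl (t : {ffun 'I_n.+1 -> 'I_B}) := (t ord_max, [ffun j => t (lift ord_max j)]).
have bij : bijective join.
  exists spl.
    move=> [x t'] /=; rewrite /spl /join ffunE unlift_none; congr pair.
    by apply/ffunP => j; rewrite !ffunE liftK.
  move=> t; apply/ffunP => i; rewrite /join /spl ffunE /=.
  by case: unliftP => [j ->|->]; rewrite ?ffunE.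
have sqj x t' : sq (join (x, t')) = rcons (sq t') x.
  rewrite /sq enum_ordSr map_rcons -map_comp /join ffunE unlift_none; congr rcons.
  apply: eq_map => i /=; rewrite ffunE.
  have -> : widen_ord (leqnSn n) i = lift ord_max i by apply: ord_inj; rewrite lift_max.
  by rewrite liftK.
rewrite /CS (reindex join (onW_bij _ bij)) /=.
rewrite big_mkcond [RHS]big_mkcond /=.
under [RHS]eq_bigr => x _ do rewrite big_distrr big_mkcond /=.
pose G (x : 'I_B) (t' : {ffun 'I_n -> 'I_B}) := if (0 < x) && (x %| m) then
   (if all (fun d => 0 < d) (sq t') && sorted dvdn (rcons (sq t') (x : nat))
    then x * (a (head (x : nat) (sq t')) * \prod_(i < n) t' i) else 0) else 0.
rewrite (eq_bigr (fun p => G p.1 p.2)); last first.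
  move=> [x t'] _; rewrite /G /=; rewrite sqj all_rcons sorted_rcons2 big_ord_recr /=.
  have -> : head m (rcons (sq t') x) = head (x : nat) (sq t') by case: (sq t').
  have -> : \prod_(i < n) join (x, t') (widen_ord (leqnSn n) i) = \prod_(i < n) t' i.
    apply: eq_bigr => i _; rewrite ffunE.
    have -> : widen_ord (leqnSn n) i = lift ord_max i by apply: ord_inj; rewrite lift_max.
    by rewrite liftK.
  rewrite ffunE unlift_none.
  rewrite /=; case: (0 < x); case: (x %| m); rewrite /= ?andbF //.
  by rewrite andbT; case: ifP => // _; rewrite [RHS]mulnC mulnA.
rewrite [RHS](eq_bigr (fun x => \sum_(t' : {ffun 'I_n -> 'I_B}) G x t')); last first.
  move=> x _; rewrite /G; case: ifP => _ //.
  by rewrite big1.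
by rewrite pair_bigA.
Qed.

Fixpoint cc (a : nat -> nat) (n m : nat) : nat :=
  match n with
  | 0 => a m
  | n'.+1 => \sum_(d < m.+1 | d %| m) d * cc a n' d
  end.

Lemma CS_cc a n B m : 0 < m -> m < B -> CS a n B m = cc a n m.
Proof.
elim: n m => [|n IH] m m0 mB; first by rewrite CS0.
rewrite CSS /=.
rewrite (eq_bigr (fun x : 'I_B => x * cc a n x)); last first.
  move=> x /andP [x0 xm]; rewrite IH //; apply: leq_ltn_trans mB; exact: dvdn_leq.
rewrite (big_ord_widen_cond _ (fun d => d %| m) (fun d => d * cc a n d) mB).
apply: eq_bigl => d; case: (posnP d) => [->|d0].
  by rewrite dvd0n /= -[m == 0]negbK -lt0n m0.
case dm: (d %| m) => //=.
by rewrite ltnS dvdn_leq.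
Qed.

Lemma chain_CS a n m : 0 < n -> chain_sum a n m = CS a n m.+1 m.
Proof.
case: n => // n _; rewrite /chain_sum /CS; apply: eq_bigr => t _.
by rewrite /sq enum_ordSl.
Qed.

Open Scope ring_scope.

Definition pb (P : Prop) : bool := if excluded_middle_informative P then true else false.
Lemma pbP (P : Prop) : pb P <-> P.
Proof. by rewrite /pb; case: excluded_middle_informative. Qed.

Section Sub.
Variables (V : zmodType) (H : V -> Prop) (sH : is_subgroup H).

Lemma subg0 : H 0. Proof. by case: sH. Qed.
Lemma subgB x y : H x -> H y -> H (x - y). Proof. by case: sH => _; apply. Qed.
Lemma subgN x : H x -> H (- x).
Proof. by move=> hx; rewrite -sub0r; apply: subgB => //; apply: subg0. Qed.
Lemma subgD x y : H x -> H y -> H (x + y).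
Proof. by move=> hx hy; rewrite -[y]opprK; apply: subgB => //; apply: subgN. Qed.
Lemma subgMn x n : H x -> H (x *+ n).
Proof. move=> hx; elim: n => [|n IH]; first by rewrite mulr0n; apply: subg0.
by rewrite mulrS; apply: subgD. Qed.
Lemma subgMz x z : H x -> H (x *~ z).
Proof. move=> hx; case: z => n; first exact: subgMn.
by rewrite NegzE mulrNz; apply/subgN/subgMn. Qed.

Lemma index_cls m : has_index H m -> exists c : V -> 'I_m, exists g : 'I_m -> V,
  (forall x y, c x = c y <-> H (x - y)) /\ (forall i, c (g i) = i).
Proof.
case=> g Hg.
pose c x := proj1_sig (constructive_indefinite_description _ (Hg x)).
have cP x : H (x - g (c x)) /\ forall j, H (x - g j) -> c x = j.
  by rewrite /c; case: constructive_indefinite_description.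
exists c, g; split; last first.
  by move=> i; apply: (proj2 (cP (g i))); rewrite subrr; apply: subg0.
move=> x y; split.
  move=> exy; have := subgB (proj1 (cP x)) (proj1 (cP y)).
  by rewrite exy opprB addrA subrK.
move=> hxy; apply: (proj2 (cP x)).
have := subgD hxy (proj1 (cP y)); by rewrite addrA subrK.
Qed.

Lemma cls_index (T : finType) (c : V -> T) :
  (forall x y, c x = c y <-> H (x - y)) ->
  has_index H #|[set t | pb (exists x, c x = t)]|.
Proof.
move=> cH; set S := [set t | _].
have ex_of : forall i : 'I_#|S|, exists x, c x = enum_val i.
  by move=> i; have := enum_valP i; rewrite inE => /pbP.
exists (fun i => proj1_sig (constructive_indefinite_description _ (ex_of i))).
move=> x.
have hx : c x \in S by rewrite inE; apply/pbP; exists x.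
exists (enum_rank_in hx (c x)); split.
  case: constructive_indefinite_description => /= y hy.
  by apply/cH; rewrite hy enum_rankK_in.
move=> j; case: constructive_indefinite_description => /= y hy /cH.
rewrite hy => e; apply: enum_val_inj; rewrite enum_rankK_in //.
Qed.

Lemma idx_uniq a b : has_index H a -> has_index H b -> a = b.
Proof.
move=> /index_cls [ca [ga [ha ga_]]] /index_cls [cb [gb [hb gb_]]].
have le : forall (p q : nat) (cp : V -> 'I_p) gp (cq : V -> 'I_q) gq,
    (forall x y, cp x = cp y <-> H (x - y)) -> (forall i, cp (gp i) = i) ->
    (forall x y, cq x = cq y <-> H (x - y)) -> (forall i, cq (gq i) = i) -> (p <= q)%N.
  move=> p q cp gp cq gq hp gp_ hq gq_.
  have inj : injective (fun i => cq (gp i)).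
    by move=> i j /hq /hp; rewrite !gp_.
  by have := leq_card _ inj; rewrite !card_ord.
by apply/eqP; rewrite eqn_leq (le _ _ _ _ _ _ ha ga_ hb gb_) (le _ _ _ _ _ _ hb gb_ ha ga_).
Qed.

End Sub.

Definition Hs (V : zmodType) (e : nat) (K : V -> Prop) (w : V) : V * int -> Prop :=
  fun x => (e%:Z %| x.2)%Z /\ K (x.1 - w *~ (x.2 %/ e%:Z)%Z).

Lemma pairB (U W : zmodType) (a c : U) (b d : W) : (a, b) - (c, d) = (a - c, b - d).
Proof. by []. Qed.

Lemma pairN (U W : zmodType) (a : U) (b : W) : - (a, b) = (- a, - b).
Proof. by []. Qed.

Lemma pairD (U W : zmodType) (a c : U) (b d : W) : (a, b) + (c, d) = (a + c, b + d).
Proof. by []. Qed.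

Lemma sub_rearr (V : zmodType) (a b w : V) (p q : int) :
  (a - b) - w *~ (p - q) = (a - w *~ p) - (b - w *~ q).
Proof. by rewrite mulrzBr !opprB !addrA addrAC [a - b + _]addrAC addrAC. Qed.

Lemma Hs_sub (V : zmodType) e (K : V -> Prop) w : (0 < e)%N -> is_subgroup K ->
  is_subgroup (Hs e K w).
Proof.
move=> e0 sK; have ez : e%:Z != 0 by rewrite eqz_nat -lt0n.
split.
  by split; [exact: dvdz0 | rewrite /= div0z mulr0z subr0; apply: subg0].
move=> [x1 x2] [y1 y2] [/dvdzP [qx ex] hx] [/dvdzP [qy ey] hy] /=.
rewrite /= in ex ey; subst x2 y2.
rewrite /= !mulzK // in hx hy; rewrite pairB /=; split; first by rewrite -mulrBl dvdz_mull.
by rewrite -mulrBl mulzK // sub_rearr; apply: subgB.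
Qed.

Lemma modz_div_sub (x y e : int) : e != 0 -> (x %% e)%Z = (y %% e)%Z ->
  ((x - y) %/ e)%Z = (x %/ e)%Z - (y %/ e)%Z.
Proof.
move=> ez h; rewrite {1}(divz_eq x e) {1}(divz_eq y e) h.
by rewrite opprD addrACA subrr addr0 -mulrBl mulzK.
Qed.

Lemma absz_mod_lt (x : int) e' : (`|(x %% e'.+1%:Z)%Z| < e'.+1)%N.
Proof.
by rewrite -ltz_nat gez0_abs ?modz_ge0 // ltz_pmod.
Qed.

Lemma absz_mod_inj (x y : int) e' :
  (inord `|(x %% e'.+1%:Z)%Z| : 'I_e'.+1) = inord `|(y %% e'.+1%:Z)%Z| ->
  (x %% e'.+1%:Z)%Z = (y %% e'.+1%:Z)%Z.
Proof.
move/(congr1 val) => /=; rewrite !inordK ?absz_mod_lt // => /(congr1 Posz).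
by rewrite !gez0_abs ?modz_ge0.
Qed.

Lemma Hs_index (V : zmodType) e (K : V -> Prop) w d : (0 < e)%N -> is_subgroup K ->
  has_index K d -> has_index (Hs e K w) (d * e).
Proof.
move=> e0 sK /(index_cls sK) [cK [gK [hK gK_]]].
case: e e0 => // e' _.
have ez : e'.+1%:Z != 0 by [].
pose c (x : V * int) : 'I_d * 'I_e'.+1 :=
  (cK (x.1 - w *~ (x.2 %/ e'.+1%:Z)%Z), inord `|(x.2 %% e'.+1%:Z)%Z|).
have sH := Hs_sub w (ltn0Sn e') sK.
have cP : forall x y, c x = c y <-> Hs e'.+1 K w (x - y).
  move=> [x1 x2] [y1 y2]; rewrite /c /Hs pairB /=; split.
    case=> /hK hk /absz_mod_inj hm; split.
      by rewrite -eqz_mod_dvd; apply/eqP.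
    by rewrite modz_div_sub // sub_rearr.
  case=> hd hk.
  have hm : (x2 %% e'.+1%:Z)%Z = (y2 %% e'.+1%:Z)%Z by apply/eqP; rewrite eqz_mod_dvd.
  rewrite hm; congr pair; apply/hK.
  by rewrite -sub_rearr -modz_div_sub.
have := cls_index cP.
suff -> : [set t | pb (exists x, c x = t)] = setT by rewrite cardsT card_prod !card_ord.
apply/setP => [[i j]]; rewrite !inE; apply/pbP; exists (gK i, (j : nat)%:Z).
rewrite /c /=.
have j0 : 0 <= (j : nat)%:Z < e'.+1%:Z by rewrite lez_nat ltz_nat ltn_ord.
rewrite divz_small ?modz_small // mulr0z subr0 gK_; congr pair.
by apply: val_inj; rewrite /= inordK.
Qed.

Lemma pair_mulz (U W : zmodType) (x : U * W) (q : int) : x *~ q = (x.1 *~ q, x.2 *~ q).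
Proof.
have hn n : x *+ n = (x.1 *+ n, x.2 *+ n).
  elim: n => [|n IH]; first by rewrite !mulr0n.
  by rewrite !mulrS IH; case: x {IH}.
case: q => n; first exact: hn.
by rewrite !NegzE !mulrNz -!pmulrn hn.
Qed.

Lemma Hs_char (V : zmodType) (H : V * int -> Prop) m : is_subgroup H -> has_index H m ->
  (0 < m)%N -> exists e w, (0 < e)%N /\ H = Hs e (fun v => H (v, 0)) w.
Proof.
move=> sH /(index_cls sH) [c [g [hc gc]]] m0.
have [k1 [k0 hk]] : exists k : nat, (0 < k)%N /\ H (0, k%:Z).
  apply: NNPP => hne.
  have inj : injective (fun j : 'I_m.+1 => c (0, (j : nat)%:Z)).
    move=> j1 j2 /hc; rewrite pairB subrr => h.
    apply: val_inj => /=; apply/eqP; apply/negP => hne'; apply: hne.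
    case: (ltngtP j1 j2) => [lt|lt|eq]; last by rewrite eq eqxx in hne'.
      exists (j2 - j1)%N; split; first by rewrite subn_gt0.
      rewrite -subzn; last exact: ltnW.
      have := subgN sH h.
      have -> : - ((0 : V), (j1 : nat)%:Z - (j2 : nat)%:Z) = (0, (j2 : nat)%:Z - (j1 : nat)%:Z).
        by rewrite pairN oppr0 opprB.
      by move=> ?.
    exists (j1 - j2)%N; split; first by rewrite subn_gt0.
    rewrite -subzn //; exact: ltnW.
  by have := leq_card _ inj; rewrite !card_ord ltnn.
pose P k := (0 < k)%N && pb (exists v, H (v, k%:Z)).
have exP : exists k, P k by exists k1; rewrite /P k0; apply/pbP; exists 0.
case: (ex_minnP exP) => e /andP [e0 /pbP [w hw]] emin.
exists e, w; split => //.
have ez : e%:Z != 0 by rewrite eqz_nat -lt0n.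
have sK : is_subgroup (fun v => H (v, 0)).
  split; first exact: (subg0 sH).
  by move=> x y hx hy; have := subgB sH hx hy; rewrite pairB subr0.
apply: functional_extensionality => -[v k]; apply: propositional_extensionality.
rewrite /Hs /=; split.
  move=> hvk.
  have h1 := subgB sH hvk (subgMz sH (k %/ e%:Z)%Z hw).
  rewrite pair_mulz pairB /= in h1.
  have hr : k - e%:Z *~ (k %/ e%:Z)%Z = (k %% e%:Z)%Z.
    by rewrite {1}(divz_eq k e%:Z) -mulrzr intz mulrC addrAC subrr add0r.
  rewrite hr in h1.
  have r0 : (k %% e%:Z)%Z = 0.
    have rge : 0 <= (k %% e%:Z)%Z by rewrite modz_ge0.
    have rlt : (k %% e%:Z)%Z < e%:Z by rewrite ltz_pmod // ltz_nat.
    case: ((k %% e%:Z)%Z) rge rlt h1 => // r _ rlt h1.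
    case: r rlt h1 => // r rlt h1.
    have := emin r.+1; rewrite /P /= => /(_ (proj2 (pbP _) (ex_intro _ _ h1))).
    by rewrite leqNgt -ltz_nat rlt.
  rewrite r0 in h1; split => //; exact/dvdz_mod0P.
case=> hd hK.
have := subgD sH hK (subgMz sH (k %/ e%:Z)%Z hw).
rewrite pair_mulz pairD /= subrK add0r -mulrzr intz mulrC divzK //.
Qed.

Lemma Hs_self (V : zmodType) e (K : V -> Prop) w : (0 < e)%N -> is_subgroup K ->
  Hs e K w (w, e%:Z).
Proof.
move=> e0 sK; have ez : e%:Z != 0 by rewrite eqz_nat -lt0n.
split; first exact: dvdzz.
by rewrite /= divzz ez mulr1z subrr; apply: subg0.
Qed.

Lemma Hs_zero (V : zmodType) e (K : V -> Prop) w v : Hs e K w (v, 0) <-> K v.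
Proof.
rewrite /Hs /= div0z mulr0z subr0; split; [by case | by split; first exact: dvdz0].
Qed.

Lemma Hs_inj (V : zmodType) e e' (K K' : V -> Prop) w w' :
  (0 < e)%N -> (0 < e')%N -> is_subgroup K -> is_subgroup K' ->
  Hs e K w = Hs e' K' w' -> [/\ e = e', K = K' & K (w - w')].
Proof.
move=> e0 e0' sK sK' eq.
have d1 : (e' %| e)%N by have := Hs_self w e0 sK; rewrite eq => -[].
have d2 : (e %| e')%N by have := Hs_self w' e0' sK'; rewrite -eq => -[].
have ee : e = e' by apply/eqP; rewrite eqn_dvd d1 d2.
subst e'.
have KK : K = K'.
  apply: functional_extensionality => v; apply: propositional_extensionality.
  by rewrite -(Hs_zero e K w) -(Hs_zero e K' w') eq.
subst K'; split => //.
have := Hs_self w e0 sK; rewrite eq => -[_] /=.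
have ez : e%:Z != 0 by rewrite eqz_nat -lt0n.
by rewrite divzz ez mulr1z.
Qed.

Lemma Hs_shift (V : zmodType) e (K : V -> Prop) w w' : is_subgroup K -> K (w - w') ->
  Hs e K w = Hs e K w'.
Proof.
move=> sK hw; apply: functional_extensionality => x; apply: propositional_extensionality.
rewrite /Hs; split => -[hd hk]; split => //.
  have := subgD sK hk (subgMz sK (x.2 %/ e%:Z)%Z hw).
  by rewrite mulrzBl addrA subrK.
have := subgB sK hk (subgMz sK (x.2 %/ e%:Z)%Z hw).
by rewrite mulrzBl opprB addrA subrK.
Qed.

Lemma num_sets_fin (W : Type) (P : (W -> Prop) -> Prop) (T : finType) (F : T -> (W -> Prop)) :
  injective F -> (forall H, P H <-> exists t, F t = H) -> num_sets P #|{: T}|.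
Proof.
move=> Fi FP; exists (fun i => F (enum_val i)); split.
  by move=> i j /Fi /enum_val_inj.
move=> H; rewrite FP; split; last by case=> i <-; exists (enum_val i).
by case=> t <-; exists (enum_rank t); rewrite enum_rankK.
Qed.

Lemma key (V : zmodType) (N : nat -> nat) :
  (forall d, num_subgroups_of_index V d (N d)) -> forall m,
  num_subgroups_of_index (V * int)%type m (\sum_(d < m.+1 | (d %| m)%N) d * N d)%N.
Proof.
move=> hN [|m'].
  rewrite big1; last by move=> [[|i] hi] //= _; rewrite mul0n.
  exists (fun i : 'I_0 => fun _ => False); split; first by case.
  move=> H; split; last by case=> -[].
  by case=> _ [g hg]; case: (hg 0) => -[].
set m := m'.+1.
pose N' d := if (d %| m)%N then N d else 0%N.
pose Q d (K : V -> Prop) := (d %| m)%N /\ is_subgroup K /\ has_index K d.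
have hQ : forall d, num_sets (Q d) (N' d).
  move=> d; rewrite /N' /Q; case: ifP => dm.
    case: (hN d) => f [fi fP]; exists f; split => // K; rewrite -fP.
    by split; [case | move=> ?; split].
  exists (fun i : 'I_0 => fun _ => False); split; first by case.
  by move=> K; split; [case | case=> -[]].
pose f d := proj1_sig (constructive_indefinite_description _ (hQ d)).
have fP d : injective (f d) /\ forall K, Q d K <-> exists i, f d i = K.
  by rewrite /f; case: constructive_indefinite_description.
have fQ d i : Q d (f d i) by apply/(proj2 (fP d)); exists i.
pose gr d i := proj1_sig (constructive_indefinite_description _ (proj2 (proj2 (fQ d i)))).
have grP d i : forall x, exists! j, f d i (x - gr d i j).
  by rewrite /gr; case: constructive_indefinite_description.
pose T := {d : 'I_m.+1 & ('I_(N' d) * 'I_d)%type}.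
pose F (t : T) := Hs (m %/ tag t)%N (f (tag t) (tagged t).1) (gr (tag t) (tagged t).1 (tagged t).2).
have -> : (\sum_(d < m.+1 | (d %| m)%N) d * N d)%N = #|{: T}|.
  rewrite card_tagged sumnE big_map big_enum big_mkcond.
  apply: eq_big => // d _; rewrite card_prod !card_ord /N'.
  by case: ifP => _; [exact: mulnC | rewrite mul0n].
have dpos d : (d %| m)%N -> (0 < d)%N.
  by case: d => // /dvd0n.
have epos d : (d %| m)%N -> (0 < m %/ d)%N.
  by move=> dm; rewrite divn_gt0 ?dpos // dvdn_leq.
have hdd d : (d %| m)%N -> (m %/ (m %/ d))%N = d.
  by move=> dm; rewrite -{1}(divnK dm) mulKn // epos.
apply: (num_sets_fin (F := F)).
  move=> [d1 [i1 j1]] [d2 [i2 j2]]; rewrite /F /= => eqH.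
  have [dm1 [s1 _]] := fQ _ i1; have [dm2 [s2 _]] := fQ _ i2.
  case: (Hs_inj (epos _ dm1) (epos _ dm2) s1 s2 eqH) => em eK ew.
  have ed : d1 = d2 by apply: ord_inj; rewrite -(hdd _ dm1) -(hdd _ dm2) em.
  subst d2.
  have ei : i1 = i2 by apply: (proj1 (fP _)).
  subst i2.
  have ej : j1 = j2.
    case: (grP _ i1 (gr _ i1 j1)) => j [_ u].
    rewrite -(u j1) ?(u j2) //; rewrite subrr; apply: (subg0 s1).
  by subst j2.
move=> H; split.
  case=> sH iH.
  have [e [w [e0 HE]]] := Hs_char sH iH (ltn0Sn m').
  have sK : is_subgroup (fun v => H (v, 0)).
    split; first exact: (subg0 sH).
    by move=> x y hx hy; have := subgB sH hx hy; rewrite pairB subr0.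
  have [c [g [hc gc]]] := index_cls sH iH.
  have cKP : forall x y, c (x, 0) = c (y, 0) <-> H (x - y, 0).
    by move=> x y; rewrite hc pairB subr0.
  have iK := @cls_index _ (fun v => H (v, 0)) _ (fun v => c (v, 0)) cKP.
  set d0 := #|_| in iK.
  have iH' := Hs_index w e0 sK iK.
  rewrite -HE in iH'.
  have md := idx_uniq sH iH' iH.
  have d0m : (d0 %| m)%N by rewrite -md dvdn_mulr.
  have d0lt : (d0 < m.+1)%N by rewrite ltnS -md leq_pmulr.
  have ed : (m %/ d0)%N = e by rewrite -md mulKn // dpos.
  have [i fi] : exists i, f d0 i = (fun v => H (v, 0)).
    by apply/(proj2 (fP d0)); split => //; split.
  have [j [hj _]] := grP d0 i w.
  exists (existT _ (Ordinal d0lt) (i, j)).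
  rewrite /F /= ed fi [RHS]HE; apply: Hs_shift => //.
  by rewrite fi in hj; have := subgN sK hj; rewrite opprB.
case=> -[d [i j]] <-; rewrite /F /=.
have [dm [s ix]] := fQ _ i.
split; first exact: (Hs_sub _ (epos _ dm) s).
by have := Hs_index (gr d i j) (epos _ dm) s ix; rewrite mulnC divnK.
Qed.

Section Pull.
Variables (U W : zmodType) (h : U -> W) (h' : W -> U).
Hypotheses (hK : cancel h h') (hK' : cancel h' h) (hB : forall x y, h (x - y) = h x - h y).

Lemma pull_sub (K : W -> Prop) : is_subgroup K -> is_subgroup (fun x => K (h x)).
Proof.
move=> [K0 KB]; split.
  have h0 : h 0 = 0 by rewrite -(subrr 0) hB subrr.
  by rewrite h0.
by move=> x y hx hy; rewrite hB; apply: KB.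
Qed.

Lemma pull_idx (K : W -> Prop) m : has_index K m -> has_index (fun x => K (h x)) m.
Proof.
case=> g hg; exists (fun i => h' (g i)) => x.
by rewrite /= (_ : (fun i => K (h (x - h' (g i)))) = (fun i => K (h x - g i))) //;
   apply: functional_extensionality => i; rewrite hB hK'.
Qed.
End Pull.

Lemma num_iso (V W : zmodType) (phi : V -> W) (psi : W -> V) m N :
  cancel phi psi -> cancel psi phi -> (forall x y, phi (x - y) = phi x - phi y) ->
  num_subgroups_of_index V m N -> num_subgroups_of_index W m N.
Proof.
move=> phiK psiK phiB [f [fi fP]].
have psiB : forall x y, psi (x - y) = psi x - psi y.
  by move=> x y; apply: (can_inj phiK); rewrite phiB !psiK.
exists (fun i w => f i (psi w)); split.
  move=> i j e; apply: fi; apply: functional_extensionality => v.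
  by have := congr1 (fun F => F (phi v)) e; rewrite /= phiK.
move=> H; split.
  case=> sH iH.
  have [i fiH] : exists i, f i = (fun x => H (phi x)).
    by apply/fP; split; [apply: (pull_sub phiB) | apply: (pull_idx psiK phiB)].
  exists i; rewrite fiH; apply: functional_extensionality => w /=; by rewrite psiK.
case=> i <-; have [sf xf] : is_subgroup (f i) /\ has_index (f i) m by apply/fP; exists i.
by split; [apply: (pull_sub psiB) | apply: (pull_idx phiK psiB)].
Qed.

Lemma iso0 (D : zmodType) m N : num_subgroups_of_index D m N ->
  num_subgroups_of_index (D * 'rV[int]_0)%type m N.
Proof.
apply: (@num_iso _ _ (fun d => (d, 0)) (fun p => p.1)) => //.
  by move=> [d r]; rewrite [r]thinmx0.
by move=> x y; rewrite pairB subr0.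
Qed.

Lemma isoS (D : zmodType) n m N :
  num_subgroups_of_index ((D * 'rV[int]_n) * int)%type m N ->
  num_subgroups_of_index (D * 'rV[int]_n.+1)%type m N.
Proof.
pose phi (p : (D * 'rV[int]_n) * int) : (D * 'rV[int]_n.+1)%type :=
  (p.1.1, row_mx (const_mx p.2 : 'rV[int]_1) p.1.2).
pose psi (q : (D * 'rV[int]_n.+1)%type) : (D * 'rV[int]_n) * int :=
  ((q.1, rsubmx (q.2 : 'rV[int]_(1 + n))), lsubmx (q.2 : 'rV[int]_(1 + n)) 0 0).
apply: (@num_iso _ _ phi psi).
- move=> [[d r] k]; rewrite /phi /psi /= row_mxKr row_mxKl mxE //.
- move=> [d R]; rewrite /phi /psi /=; congr pair.
  have -> : const_mx (lsubmx (R : 'rV[int]_(1 + n)) 0 0) = lsubmx (R : 'rV[int]_(1 + n)).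
    by apply/matrixP => i j; rewrite !ord1 mxE.

  exact: (@hsubmxK _ 1 1 n R).
- move=> [[d1 r1] k1] [[d2 r2] k2]; rewrite /phi /= pairB.
  congr pair; apply/matrixP => i j; rewrite !mxE.
  by case: splitP => k _; rewrite !mxE.
Qed.

Lemma countD (D : zmodType) (a : nat -> nat) :
  (forall d, num_subgroups_of_index D d (a d)) ->
  forall n m, num_subgroups_of_index (D * 'rV[int]_n)%type m (cc a n m).
Proof.
move=> ha; elim=> [|n IH] m; first exact: iso0.
apply: isoS; exact: (key IH).
Qed.

Close Scope ring_scope.

Theorem proposition9p7 (D : finZmodType) (n : nat) (hn : (1 <= n)%N)
  (a : nat -> nat)
  (ha : forall d : nat, num_subgroups_of_index D d (a d))
  (m : nat) (hm : (1 <= m)%N) :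
  num_subgroups_of_index (D * 'rV[int]_n)%type m (chain_sum a n m).
Proof.
by rewrite chain_CS // CS_cc //; apply: countD.
Qed.
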